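(* Let $a,q\ge1$ be integers, let $H=(L\cup R,E(H))$ be a bipartite graph with $|L|=|R|=a$ containing no cycle of length less than $6$ (chosen with the maximum number of edges), $m=|E(H)|$, and let $G=G(E_A,E_B)$ be the directed graph constructed from $E_A,E_B\in\{0,1\}^m$ as in the context. (1) If $E_A\cap E_B\neq\emptyset$ (i.e. there is $j$ with $E_A[j]=E_B[j]=1$), then the girth of $G$ equals $2q$. (2) If $E_A\cap E_B=\emptyset$, then the girth of $G$ is at least $6q$.
   Context: Fix an ordering $E(H)=\{e_1,\dots,e_m\}$ with each $e_j=(l,r)$, $l\in L$, $r\in R$. The graph $G(E_A,E_B)$: for each $i\in\{1,\dots,q\}$ make a copy $l_i$ of every $l\in L$ and a copy $r_i$ of every $r\in R$ (layer $i$ is $L_i\cup R_i$). Pipes: for every $r\in R$ the directed path $r_1\to r_2\to\dots\to r_q$, and for every $l\in L$ the directed path $l_q\to l_{q-1}\to\dots\to l_1$. Input-dependent edges: for each $j$ with $e_j=(l,r)$, if $E_A[j]=1$ add the directed edge $(l_1,r_1)$, and if $E_B[j]=1$ add the directed edge $(r_q,l_q)$. Shortcut tree: a balanced binary tree $T$ with $q$ leaves $t_1,\dots,t_q$, tree edges oriented toward the leaves, plus a directed edge from every vertex of $L_i\cup R_i$ to $t_i$ for each $i$. The girth of $G$ is the length of a shortest directed cycle. *)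

(* Defs.v *)
From mathcomp Require Import all_boot.
Set Implicit Arguments. Unset Strict Implicit. Unset Printing Implicit Defensive.

Definition Hadj (a : nat) (H : {set 'I_a * 'I_a}) : rel ('I_a + 'I_a) :=
  fun u v => match u, v with
  | inl l, inr r => (l, r) \in H
  | inr r, inl l => (l, r) \in H
  | _, _ => false
  end.

Definition no_short_cycle (a : nat) (H : {set 'I_a * 'I_a}) : Prop :=
  forall c : seq ('I_a + 'I_a), 3 <= size c -> ucycle (Hadj H) c -> 6 <= size c.

(* Vertices: l_i (inl (inl (i,l))), r_i (inl (inr (i,r))) with 0-based layer
   index i : 'I_q (layer i+1 of the paper), and the nodes of the balanced
   binary tree T in heap layout: node k : 'I_(2q-1) has children 2k+1, 2k+2;
   the leaves are the nodes q-1, ..., 2q-2, leaf t_(i+1) being node q-1+i. *)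
Definition gvert (q a : nat) : finType :=
  (('I_q * 'I_a) + ('I_q * 'I_a) + 'I_(2 * q).-1)%type.

Definition Gadj (q a m : nat) (e : 'I_m -> 'I_a * 'I_a) (EA EB : 'I_m -> bool)
  : rel (gvert q a) :=
  fun u v => match u, v with
  (* pipe r_1 -> r_2 -> ... -> r_q *)
  | inl (inr (i, r)), inl (inr (i', r')) => (r == r') && (i' == i.+1 :> nat)
  (* pipe l_q -> l_(q-1) -> ... -> l_1 *)
  | inl (inl (i, l)), inl (inl (i', l')) => (l == l') && (i == i'.+1 :> nat)
  (* E_A edges (l_1, r_1) *)
  | inl (inl (i, l)), inl (inr (i', r)) =>
      [&& (i == 0 :> nat), (i' == 0 :> nat) & [exists j, (e j == (l, r)) && EA j]]
  (* E_B edges (r_q, l_q) *)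
  | inl (inr (i, r)), inl (inl (i', l)) =>
      [&& (i == q.-1 :> nat), (i' == q.-1 :> nat) & [exists j, (e j == (l, r)) && EB j]]
  | inr k, inr k' => (k' == k.*2.+1 :> nat) || (k' == k.*2.+2 :> nat)
  | inl (inl (i, _)), inr k => (k == q.-1 + i :> nat)
  | inl (inr (i, _)), inr k => (k == q.-1 + i :> nat)
  | inr _, inl _ => false
  end.

Definition has_dicycle_of_length (T : finType) (g : rel T) (n : nat) : Prop :=
  exists c : seq T, [/\ c != [::], ucycle g c & size c = n].

Definition girth_is (T : finType) (g : rel T) (n : nat) : Prop :=
  has_dicycle_of_length g n /\ forall k, has_dicycle_of_length g k -> n <= k.

(* girth is at least n (vacuous if g is acyclic, girth = infinity) *)
Definition girth_at_least (T : finType) (g : rel T) (n : nat) : Prop :=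
  forall k, has_dicycle_of_length g k -> n <= k.

(* Main.v *)
Require Import Defs.
From mathcomp Require Import all_boot.
From mathcomp Require Import zify.
Set Implicit Arguments. Unset Strict Implicit. Unset Printing Implicit Defensive.

Lemma cycle_nthP (T : eqType) (r : rel T) (x0 : T) (c : seq T) :
  cycle r c <-> (forall i, i < size c -> r (nth x0 c i) (nth x0 c (i.+1 %% size c))).
Proof.
case: c => [|x p] //=.
have E1 i : i <= size p -> nth x0 (x :: rcons p x) i = nth x0 (x :: p) i.
  by move=> hi; rewrite -rcons_cons nth_rcons /= ltnS hi.
have E2 i : i < (size p).+1 -> nth x0 (rcons p x) i = nth x0 (x :: p) (i.+1 %% (size p).+1).
  move=> hi; rewrite nth_rcons; case: ltngtP => h.
  - by rewrite modn_small.
  - exfalso. move: h hi. clear. lia.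
  - by rewrite h modnn.
split.
- move/(pathP x0) => H i hi.
  have := H i; rewrite size_rcons => /(_ hi).
  have hi' : i <= size p by [].
  by rewrite (E1 _ hi') (E2 _ hi).
- move=> H; apply/(pathP x0) => i; rewrite size_rcons => hi.
  have hi' : i <= size p by [].
  by rewrite (E1 _ hi') (E2 _ hi); apply: H.
Qed.

Lemma modS x d : 0 < d -> x.+1 %% d = if x %% d == d.-1 then 0 else (x %% d).+1.
Proof.
move=> d0; rewrite -addn1 -modnDml; have := ltn_pmod x d0.
case: eqP => [->|ne] h.
- by rewrite addn1 prednK // modnn.
- rewrite modn_small addn1 //; move: ne h; clear; lia.
Qed.

Section G.
Variables (q a m : nat) (e : 'I_m -> 'I_a * 'I_a) (EA EB : 'I_m -> bool).
Hypothesis q0 : 0 < q.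
Local Notation V := (gvert q a).
Local Notation g := (@Gadj q a m e EA EB).

Definition layer (v : V) : bool := if v is inl _ then true else false.
Definition phase (v : V) : nat :=
  match v with inl (inr (i, _)) => i | inl (inl (i, _)) => q + (q.-1 - i) | inr _ => 0 end.
Definition lab (v : V) : nat :=
  match v with inl (inr (_, r)) => r | inl (inl (_, l)) => l | inr _ => 0 end.

Ltac brk := repeat match goal with
  | H : is_true (_ && _) |- _ => case/andP: H => ??
  | H : is_true (_ == _) |- _ => move/eqP: H => ?
  end.

Lemma tree_step k v : g (inr k) v -> exists2 k', v = inr k' & k < k'.
Proof. case: v => [[[i l]|[i r]]|k'] //= H; exists k' => //; case/orP: H => /eqP ->; lia. Qed.

Lemma phase_lt u : layer u -> phase u < q.*2.
Proof. case: u => [[[i l]|[i r]]|k] //= _; have := ltn_ord i; lia. Qed.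

Lemma phase_step u v : layer u -> layer v -> g u v ->
  phase v = if phase u == q.*2.-1 then 0 else (phase u).+1.
Proof.
case: u => [[[i l]|[i r]]|k] //; case: v => [[[i' l']|[i' r']]|k'] //= _ _ H; brk;
  have := ltn_ord i; have := ltn_ord i'; case: eqP; lia.
Qed.

Lemma pipe_lab u v : layer u -> layer v -> g u v ->
  phase u != q.-1 -> phase u != q.*2.-1 -> lab v = lab u.
Proof.
case: u => [[[i l]|[i r]]|k] //; case: v => [[[i' l']|[i' r']]|k'] //= _ _ H; brk;
  have := ltn_ord i; have := ltn_ord i'; try (subst; done); try lia.
Qed.

Lemma EB_edge u v : layer u -> layer v -> g u v -> phase u = q.-1 ->
  exists j, [/\ EB j, (e j).1 = lab v :> nat & (e j).2 = lab u :> nat].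
Proof.
case: u => [[[i l]|[i r]]|k] //; case: v => [[[i' l']|[i' r']]|k'] //= _ _ H; brk;
  have := ltn_ord i; have := ltn_ord i'; try lia.
move=> _ _ _; match goal with H : is_true [exists _, _] |- _ => case/existsP: H end => j /andP[/eqP ej hj]; exists j; by rewrite ej.
Qed.

Lemma EA_edge u v : layer u -> layer v -> g u v -> phase u = q.*2.-1 ->
  exists j, [/\ EA j, (e j).1 = lab u :> nat & (e j).2 = lab v :> nat].
Proof.
case: u => [[[i l]|[i r]]|k] //; case: v => [[[i' l']|[i' r']]|k'] //= _ _ H; brk;
  have := ltn_ord i; have := ltn_ord i'; try lia.
move=> _ _ _; match goal with H : is_true [exists _, _] |- _ => case/existsP: H end => j /andP[/eqP ej hj]; exists j; by rewrite ej.
Qed.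

Lemma phase_lab_inj u v : layer u -> layer v -> phase u = phase v -> lab u = lab v -> u = v.
Proof.
case: u => [[[i l]|[i r]]|k] //; case: v => [[[i' l']|[i' r']]|k'] //= _ _;
  have := ltn_ord i; have := ltn_ord i'; try lia.
- move=> ? ? ? /val_inj ->; have -> : i = i' by apply: val_inj => /=; lia. by [].
- by move=> ? ? /val_inj -> /val_inj ->.
Qed.


Section Seq.
Variables (w : nat -> V) (n : nat).
Hypotheses (Hw : forall j, g (w j) (w j.+1)) (Hper : forall j, w (j + n) = w j) (n0 : 0 < n).

Lemma seq_layer j : layer (w j).
Proof.
case E: (w j) => [//|k]; exfalso.
have: forall t, exists2 k', w (j + t) = inr k' & k + t <= k'.
  elim=> [|t [k' E' lt]]; first by exists k; rewrite ?addn0.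
  have := Hw (j + t); rewrite E' => /tree_step [k'' E'' lt']; exists k''.
    by rewrite addnS.
  move: lt lt'; clear; lia.
case/(_ n) => k'; rewrite Hper E => -[<-]; move: n0; clear; lia.
Qed.

Lemma seq_phase j : phase (w j) = (phase (w 0) + j) %% q.*2.
Proof.
have d0 : 0 < q.*2 by move: q0; clear; lia.
elim: j => [|j IH]; first by rewrite addn0 modn_small // phase_lt // seq_layer.
by rewrite (phase_step (seq_layer j) (seq_layer j.+1) (Hw j)) IH addnS modS.
Qed.

Lemma lab_const s j : (forall i, i < j -> phase (w (s+i)) != q.-1 /\ phase (w (s+i)) != q.*2.-1) ->
  lab (w (s+j)) = lab (w s).
Proof.
elim: j => [|j IH] H; first by rewrite addn0.
have [h1 h2] := H j (ltnSn j).
rewrite addnS (pipe_lab (seq_layer _) (seq_layer _) (Hw _) h1 h2).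
apply: IH => i hi; apply: H; exact: ltnW.
Qed.

Hypothesis Hph : forall j, phase (w j) = j %% q.*2.

Lemma ph_mod t r : r < q.*2 -> phase (w (t * q.*2 + r)) = r.
Proof. by move=> hr; rewrite Hph modnMDl modn_small. Qed.

Lemma blockR t j : j < q -> lab (w (t * q.*2 + j)) = lab (w (t * q.*2)).
Proof.
move=> hj; apply: lab_const => i hi; rewrite ph_mod; last by move: hi hj; clear; lia.
by split; apply/eqP; move: hi hj; clear; lia.
Qed.

Lemma blockL t j : j < q -> lab (w (t * q.*2 + q + j)) = lab (w (t * q.*2 + q)).
Proof.
move=> hj; apply: lab_const => i hi; rewrite -addnA ph_mod; last by move: hi hj; clear; lia.
by split; apply/eqP; move: hi hj q0; clear; lia.
Qed.

Lemma edgeB t : exists j, [/\ EB j, (e j).1 = lab (w (t * q.*2 + q)) :> nat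
   & (e j).2 = lab (w (t * q.*2)) :> nat].
Proof.
have := EB_edge (seq_layer (t * q.*2 + q.-1)) (seq_layer _) (Hw _).
rewrite ph_mod; last by move: q0; clear; lia.
case=> // j [h1 h2 h3]; exists j; split => //.
  by rewrite h2 -addnS prednK.
by rewrite h3 blockR // prednK.
Qed.

Lemma edgeA t : exists j, [/\ EA j, (e j).1 = lab (w (t * q.*2 + q)) :> nat
   & (e j).2 = lab (w (t.+1 * q.*2)) :> nat].
Proof.
have := EA_edge (seq_layer (t * q.*2 + q + q.-1)) (seq_layer _) (Hw _).
rewrite -addnA ph_mod; last by move: q0; clear; lia.
have E : (t * q.*2 + (q + q.-1)).+1 = t.+1 * q.*2 by move: q0; clear; lia.
case; first by move: q0; clear; lia.
move=> j [h1 h2 h3]; exists j; split => //.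
  by rewrite h2 addnA blockL // prednK.
by rewrite h3 E.
Qed.

End Seq.

Lemma cycle_seq c : c != [::] -> cycle g c -> uniq c ->
  exists w : nat -> V, [/\ forall j, g (w j) (w j.+1), forall j, w (j + size c) = w j,
     forall i j, i < size c -> j < size c -> w i = w j -> i = j
   & forall j, phase (w j) = j %% q.*2].
Proof.
case: c => [//|x0 p] _ Hc Hu. set c := x0 :: p. set n := size c. have n0 : 0 < n by [].
pose y j := nth x0 c (j %% n).
have Hy j : g (y j) (y j.+1).
  have := (proj1 (cycle_nthP g x0 c) Hc) (j %% n) (ltn_pmod j n0).
  have E : (j %% n).+1 %% n = j.+1 %% n by rewrite -addn1 modnDml addn1.
  by rewrite E.
have Hyp j : y (j + n) = y j by rewrite /y modnDr.
have Hyi i j : y i = y j -> i %% n = j %% n.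
  move=> E; apply/eqP; rewrite -(nth_uniq x0 (ltn_pmod i n0) (ltn_pmod j n0) Hu).
  by apply/eqP.
pose p0 := phase (y 0). pose s := q.*2 - p0.
have hp : p0 < q.*2 := phase_lt (seq_layer Hy Hyp n0 0).
exists (fun j => y (s + j)); split.
- by move=> j; rewrite addnS; apply: Hy.
- by move=> j; rewrite addnA Hyp.
- move=> i j hi hj /Hyi /eqP; rewrite eqn_modDl !modn_small //; exact/eqP.
- move=> j; rewrite (seq_phase Hy Hyp n0) addnA (_ : p0 + s = q.*2) ?modnDl //.
  by rewrite /s; move: hp; clear; lia.
Qed.

Lemma cycle_len c : c != [::] -> cycle g c -> uniq c -> size c %% q.*2 = 0.
Proof.
move=> cn Hc Hu; have [w [Hw Hp Hi Hph]] := cycle_seq cn Hc Hu.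
by have := Hph (0 + size c); rewrite Hp Hph mod0n add0n => <-.
Qed.

Lemma no_len1 c : (forall j, ~~ (EA j && EB j)) -> injective e ->
  c != [::] -> cycle g c -> uniq c -> size c = q.*2 -> False.
Proof.
move=> Hd einj cn Hc Hu En.
have [w [Hw Hp Hi Hph]] := cycle_seq cn Hc Hu.
have n0 : 0 < size c by rewrite En; move: q0; clear; lia.
have [j1 [hb e11 e12]] := edgeB Hw Hp n0 Hph 0.
have [j2 [ha e21 e22]] := edgeA Hw Hp n0 Hph 0.
have W : w (1 * q.*2) = w (0 * q.*2) by rewrite mul1n mul0n -En -(add0n (size c)) Hp.
rewrite W in e22.
have E : e j1 = e j2.
  rewrite [e j1]surjective_pairing [e j2]surjective_pairing.
  congr pair; apply: val_inj => /=.
  - by rewrite e11 e21.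
  - by rewrite e12 e22.
have := Hd j1; rewrite (einj _ _ E) ha /=; by rewrite -(einj _ _ E) hb.
Qed.

Lemma no_len2 (H : {set 'I_a * 'I_a}) c : injective e -> no_short_cycle H ->
  (forall j, e j \in H) ->
  c != [::] -> cycle g c -> uniq c -> size c = 2 * q.*2 -> False.
Proof.
move=> einj HH eH cn Hc Hu En.
have [w [Hw Hp Hi Hph]] := cycle_seq cn Hc Hu.
have n0 : 0 < size c by rewrite En; move: q0; clear; lia.
have [j1 [_ e11 e12]] := edgeB Hw Hp n0 Hph 0.
have [j2 [_ e21 e22]] := edgeA Hw Hp n0 Hph 0.
have [j3 [_ e31 e32]] := edgeB Hw Hp n0 Hph 1.
have [j4 [_ e41 e42]] := edgeA Hw Hp n0 Hph 1.
have W : w (2 * q.*2) = w (0 * q.*2) by rewrite mul0n -En -(add0n (size c)) Hp.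
rewrite W in e42.
have L j := seq_layer Hw Hp n0 j.
have R01 : lab (w (0 * q.*2)) != lab (w (1 * q.*2)).
  apply/eqP => E.
  have P : phase (w (0 * q.*2)) = phase (w (1 * q.*2)) by rewrite !Hph !mul0n !mul1n mod0n modnn.
  have := Hi _ _ _ _ (phase_lab_inj (L _) (L _) P E).
  rewrite En => F; have := F ltac:(move: q0; clear; lia) ltac:(move: q0; clear; lia).
  move: q0; clear; lia.
have L01 : lab (w (0 * q.*2 + q)) != lab (w (1 * q.*2 + q)).
  apply/eqP => E.
  have P : phase (w (0 * q.*2 + q)) = phase (w (1 * q.*2 + q)) by rewrite !Hph !mul0n !mul1n add0n modnDl.
  have := Hi _ _ _ _ (phase_lab_inj (L _) (L _) P E).
  rewrite En => F; have := F ltac:(move: q0; clear; lia) ltac:(move: q0; clear; lia).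
  move: q0; clear; lia.
pose l0 := (e j1).1; pose r0 := (e j1).2; pose l1 := (e j3).1; pose r1 := (e j3).2.
have h1 : (l0, r0) \in H by rewrite /l0 /r0 -surjective_pairing.
have h3 : (l1, r1) \in H by rewrite /l1 /r1 -surjective_pairing.
have h2 : (l0, r1) \in H.
  have -> : (l0, r1) = e j2; last exact: eH.
  rewrite [e j2]surjective_pairing; congr pair; apply: val_inj => /=.
  - by rewrite /l0 e11 e21.
  - by rewrite /r1 e32 e22.
have h4 : (l1, r0) \in H.
  have -> : (l1, r0) = e j4; last exact: eH.
  rewrite [e j4]surjective_pairing; congr pair; apply: val_inj => /=.
  - by rewrite /l1 e31 e41.
  - by rewrite /r0 e12 e42.
have nl : l0 != l1 by apply: contra L01 => /eqP E; rewrite -e11 -e31 -/l0 -/l1 E.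
have nr : r0 != r1 by apply: contra R01 => /eqP E; rewrite -e12 -e32 -/r0 -/r1 E.
have := HH [:: inl l0; inr r0; inl l1; inr r1] isT.
have U : ucycle (Hadj H) [:: inl l0; inr r0; inl l1; inr r1].
  rewrite /ucycle /= h1 h2 h3 h4 /= !inE /=.
  apply/and3P; split => //.
  - by apply/negP => /orP [/eqP [] E | /eqP //]; rewrite E eqxx in nl.
by move/(_ U).
Qed.
End G.

Lemma exist_cycle q' a m (e : 'I_m -> 'I_a * 'I_a) (EA EB : 'I_m -> bool) j :
  EA j -> EB j -> has_dicycle_of_length (@Gadj q'.+1 a m e EA EB) (2 * q'.+1).
Proof.
move=> ha hb.
pose l0 := (e j).1; pose r0 := (e j).2.
have ej : e j = (l0, r0) by rewrite /l0 /r0 -surjective_pairing.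
pose f (i : nat) : gvert q'.+1 a :=
  if i < q'.+1 then inl (inr (inord i, r0)) else inl (inl (inord (q'.+1.*2.-1 - i), l0)).
exists (mkseq f (2 * q'.+1)); split.
- by rewrite -size_eq0 size_mkseq.
- apply/andP; split.
  + apply/(cycle_nthP _ (f 0)) => i; rewrite size_mkseq => hi.
    rewrite !nth_mkseq //; last by apply: ltn_pmod.
    have [hi1|hi1] := ltnP i.+1 (2 * q'.+1).
    * rewrite modn_small // /f.
      case: (ltnP i q'.+1) => h1; case: (ltnP i.+1 q'.+1) => h2 /=.
      -- by rewrite eqxx /= !inordK.
      -- rewrite !inordK //=; last by lia.
         rewrite (_ : i == q' = true); last by apply/eqP; lia.
         rewrite (_ : q'.*2.+1 - i.+1 == q' = true); last by apply/eqP; lia.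
         by apply/existsP; exists j; rewrite ej eqxx.
      -- exfalso; lia.
      -- have A : q'.*2.+1 - i < q'.+1 by move: h1 h2 hi hi1; clear; lia.
         have B : q'.*2.+1 - i.+1 < q'.+1 by move: h1 h2 hi hi1; clear; lia.
         rewrite eqxx /= (inordK A) (inordK B).
         by apply/eqP; move: h1 h2 hi hi1; clear; lia.
    * have Ei : i = q'.*2.+1 by move: hi hi1; clear; lia.
      rewrite (_ : i.+1 = 2 * q'.+1); last by lia.
      rewrite modnn /f /= Ei.
      case: ifP => h1; first by lia.
      rewrite /= !inordK //; try lia.
      rewrite (_ : q'.*2.+1 - q'.*2.+1 == 0 = true); last by apply/eqP; lia.
      by apply/existsP; exists j; rewrite ej eqxx.
  + rewrite /mkseq map_inj_in_uniq ?iota_uniq // => x y; rewrite !mem_iota /= => hx hy.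
    rewrite /f; case: ifP => h1; case: ifP => h2 //.
    * move=> [] /(congr1 val); rewrite /= !inordK //.
    * move=> [] /(congr1 val); rewrite /= !inordK //; try lia.
- by rewrite size_mkseq.
Qed.

Theorem mainTheorem6 (a q m : nat) (H : {set 'I_a * 'I_a})
    (e : 'I_m -> 'I_a * 'I_a) (EA EB : 'I_m -> bool) :
  0 < a -> 0 < q ->
  no_short_cycle H ->
  (forall H' : {set 'I_a * 'I_a}, no_short_cycle H' -> #|H'| <= #|H|) ->
  m = #|H| -> injective e -> (forall j, e j \in H) ->
  ((exists j, EA j && EB j) -> girth_is (@Gadj q a m e EA EB) (2 * q)) /\
  ((forall j, ~~ (EA j && EB j)) -> girth_at_least (@Gadj q a m e EA EB) (6 * q)).
Proof.
move=> a0 q0 HH _ _ einj eH; split.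
- move=> [j /andP [ha hb]]; split.
  + by case: q q0 => // q' _; apply: exist_cycle ha hb.
  + move=> k [c [cn /andP [Hc Hu] <-]].
    have := cycle_len q0 cn Hc Hu => /eqP hd.
    rewrite mul2n; apply: dvdn_leq; last exact: hd.
    by rewrite lt0n size_eq0.
- move=> Hd k [c [cn /andP [Hc Hu] <-]].
  have := cycle_len q0 cn Hc Hu => /eqP hd.
  have E := divnK hd.
  have n0 : 0 < size c by rewrite lt0n size_eq0.
  move: E; case: (size c %/ q.*2) => [|[|[|t]]] E.
  + by rewrite -E in n0.
  + by exfalso; apply: (no_len1 q0 Hd einj cn Hc Hu); rewrite -E mul1n.
  + by exfalso; apply: (no_len2 q0 einj HH eH cn Hc Hu); rewrite -E.
  + rewrite -E; lia.
Qed.
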